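(* Let $U\subset\mathbb{R}^3$ be open with coordinates $(p_1,p_2,p_3)$, let $\lambda_1,\lambda_2,\lambda_3$ be smooth real functions of one real variable, and let $f\colon U\to\mathbb{R}$ be smooth. For $\lambda\in\mathbb{R}$ define the $1$-form $$\alpha_\lambda=(\lambda-\lambda_2(p_2))(\lambda-\lambda_3(p_3))f_1dp_1+(\lambda-\lambda_1(p_1))(\lambda-\lambda_3(p_3))f_2dp_2+(\lambda-\lambda_1(p_1))(\lambda-\lambda_2(p_2))f_3dp_3 .$$ Then $\alpha_\lambda\wedge d\alpha_\lambda=0$ for all $\lambda\in\mathbb{R}$ if and only if $$(\lambda_2(p_2)-\lambda_3(p_3))f_1f_{23}+(\lambda_3(p_3)-\lambda_1(p_1))f_2f_{13}+(\lambda_1(p_1)-\lambda_2(p_2))f_3f_{12}=0\quad\text{on }U.$$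
   Context: $f_i=\partial f/\partial p_i$, $f_{ij}=\partial^2f/\partial p_i\partial p_j$; each $\lambda_i$ depends only on the coordinate $p_i$. *)

(* Defs.v *)
From Stdlib Require Import Reals.
Open Scope R_scope.

(* Open subsets of R^3 (box neighbourhoods, equivalent to Euclidean balls). *)
Definition is_open3 (U : R -> R -> R -> Prop) : Prop :=
  forall x y z, U x y z ->
    exists eps, 0 < eps /\
      forall a b c, Rabs (a - x) < eps -> Rabs (b - y) < eps ->
                    Rabs (c - z) < eps -> U a b c.

Definition continuous_on3 (U : R -> R -> R -> Prop) (g : R -> R -> R -> R) : Prop :=
  forall x y z, U x y z -> forall eps, 0 < eps ->
    exists del, 0 < del /\
      forall a b c, Rabs (a - x) < del -> Rabs (b - y) < del ->
                    Rabs (c - z) < del -> Rabs (g a b c - g x y z) < eps.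

Inductive coord : Type := P1 | P2 | P3.

Definition pd (i : coord) (g : R -> R -> R -> R) (x y z l : R) : Prop :=
  match i with
  | P1 => derivable_pt_lim (fun t => g t y z) x l
  | P2 => derivable_pt_lim (fun t => g x t z) y l
  | P3 => derivable_pt_lim (fun t => g x y t) z l
  end.

CoInductive smooth_on3 (U : R -> R -> R -> Prop) (g : R -> R -> R -> R) : Prop :=
  smooth_on3_intro :
    continuous_on3 U g ->
    (forall i : coord, exists gi : R -> R -> R -> R,
        (forall x y z, U x y z -> pd i g x y z (gi x y z)) /\ smooth_on3 U gi) ->
    smooth_on3 U g.

CoInductive smooth1 (g : R -> R) : Prop :=
  smooth1_intro :
    forall g' : R -> R, (forall x, derivable_pt_lim g x (g' x)) -> smooth1 g' ->
    smooth1 g.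

(* For a 1-form a1 dp1 + a2 dp2 + a3 dp3 on U, the condition  alpha /\ d alpha = 0
   on U, written in coordinates: the dp1^dp2^dp3 coefficient of alpha /\ d alpha is
     a1 (d2 a3 - d3 a2) - a2 (d1 a3 - d3 a1) + a3 (d1 a2 - d2 a1),
   where d_j a_i denotes the partial derivative of a_i w.r.t. p_j. *)
Definition wedge_d_zero (U : R -> R -> R -> Prop) (a1 a2 a3 : R -> R -> R -> R) : Prop :=
  forall x y z, U x y z ->
  forall d12 d13 d21 d23 d31 d32 : R,
    pd P2 a1 x y z d12 -> pd P3 a1 x y z d13 ->
    pd P1 a2 x y z d21 -> pd P3 a2 x y z d23 ->
    pd P1 a3 x y z d31 -> pd P2 a3 x y z d32 ->
    a1 x y z * (d32 - d23) - a2 x y z * (d31 - d13) + a3 x y z * (d21 - d12) = 0.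

Definition alpha1 (l1 l2 l3 : R -> R) (f1 : R -> R -> R -> R) (lam : R) :=
  fun x y z => (lam - l2 y) * (lam - l3 z) * f1 x y z.
Definition alpha2 (l1 l2 l3 : R -> R) (f2 : R -> R -> R -> R) (lam : R) :=
  fun x y z => (lam - l1 x) * (lam - l3 z) * f2 x y z.
Definition alpha3 (l1 l2 l3 : R -> R) (f3 : R -> R -> R -> R) (lam : R) :=
  fun x y z => (lam - l1 x) * (lam - l2 y) * f3 x y z.

(* Main.v *)
Require Import Defs.
From Stdlib Require Import Reals Lra.
Open Scope R_scope.
From Stdlib Require Import Reals.

Lemma dmul (f g : R -> R) t a b v :
  derivable_pt_lim f t a -> derivable_pt_lim g t b -> v = a * g t + f t * b ->
  derivable_pt_lim (fun u => f u * g u) t v.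
Proof. intros Hf Hg ->. exact (derivable_pt_lim_mult f g t a b Hf Hg). Qed.

Lemma dsub (f g : R -> R) t a b :
  derivable_pt_lim f t a -> derivable_pt_lim g t b ->
  derivable_pt_lim (fun u => f u - g u) t (a - b).
Proof. intros Hf Hg. exact (derivable_pt_lim_minus f g t a b Hf Hg). Qed.

Lemma dcst c t : derivable_pt_lim (fun _ => c) t 0.
Proof. exact (derivable_pt_lim_const c t). Qed.

Lemma dform1 (L F : R -> R) lam K t L' F' :
  derivable_pt_lim L t L' -> derivable_pt_lim F t F' ->
  derivable_pt_lim (fun u => (lam - L u) * K * F u) t (- L' * K * F t + (lam - L t) * K * F').
Proof.
  intros HL HF. eapply dmul; [| exact HF |].
  - eapply dmul; [ apply dsub; [apply dcst | exact HL] | apply dcst | reflexivity].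
  - ring.
Qed.

Lemma dform2 (L F : R -> R) lam K t L' F' :
  derivable_pt_lim L t L' -> derivable_pt_lim F t F' ->
  derivable_pt_lim (fun u => K * (lam - L u) * F u) t (K * (- L') * F t + K * (lam - L t) * F').
Proof.
  intros HL HF. eapply dmul; [| exact HF |].
  - eapply dmul; [ apply dcst | apply dsub; [apply dcst | exact HL] | reflexivity].
  - ring.
Qed.

Lemma dpl_loc (f g : R -> R) x l r : 0 < r ->
  (forall t, Rabs (t - x) < r -> f t = g t) ->
  derivable_pt_lim g x l -> derivable_pt_lim f x l.
Proof.
  intros Hr Heq Hg eps He. destruct (Hg eps He) as [d Hd].
  assert (Hm : 0 < Rmin d r) by (apply Rmin_pos; [apply cond_pos | exact Hr]).
  exists (mkposreal _ Hm). intros h Hh0 Hh. simpl in Hh.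
  rewrite !Heq. apply Hd; auto. eapply Rlt_le_trans; [exact Hh| apply Rmin_l].
  rewrite Rminus_diag, Rabs_R0; exact Hr.
  replace (x + h - x) with h by ring. eapply Rlt_le_trans; [exact Hh| apply Rmin_r].
Qed.

Lemma pd_ext U F G i x y z l : is_open3 U -> (forall a b c, U a b c -> F a b c = G a b c) ->
  U x y z -> pd i G x y z l -> pd i F x y z l.
Proof.
  intros HO Heq HU. destruct (HO x y z HU) as [e [He Hb]].
  assert (H0 : forall w, Rabs (w - w) < e) by (intro w; rewrite Rminus_diag, Rabs_R0; exact He).
  destruct i; simpl; apply dpl_loc with e; auto; intros t Ht; apply Heq; apply Hb; auto.
Qed.

Lemma clairaut (g A B C D : R -> R -> R) x y r :
  0 < r ->
  (forall s t, Rabs (s - x) < r -> Rabs (t - y) < r -> derivable_pt_lim (fun u => g u t) s (A s t)) ->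
  (forall s t, Rabs (s - x) < r -> Rabs (t - y) < r -> derivable_pt_lim (fun u => A s u) t (B s t)) ->
  (forall s t, Rabs (s - x) < r -> Rabs (t - y) < r -> derivable_pt_lim (fun u => g s u) t (C s t)) ->
  (forall s t, Rabs (s - x) < r -> Rabs (t - y) < r -> derivable_pt_lim (fun u => C u t) s (D s t)) ->
  (forall eps, 0 < eps -> exists del, 0 < del /\ forall s t, Rabs (s - x) < del -> Rabs (t - y) < del -> Rabs (B s t - B x y) < eps) ->
  (forall eps, 0 < eps -> exists del, 0 < del /\ forall s t, Rabs (s - x) < del -> Rabs (t - y) < del -> Rabs (D s t - D x y) < eps) ->
  B x y = D x y.
Proof.
  intros Hr HA HB HC HD CB CD.
  destruct (Req_dec (B x y) (D x y)) as [|Hne]; [assumption|exfalso].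
  set (eps := Rabs (B x y - D x y) / 2).
  assert (Heps : 0 < eps) by (unfold eps; assert (0 < Rabs (B x y - D x y)) by (apply Rabs_pos_lt; intro; apply Hne; lra); lra).
  destruct (CB eps Heps) as [d1 [Hd1 Hb1]]. destruct (CD eps Heps) as [d2 [Hd2 Hb2]].
  set (h := Rmin r (Rmin d1 d2) / 2).
  assert (Hm : 0 < Rmin r (Rmin d1 d2)) by (repeat apply Rmin_pos; auto).
  assert (Hh : 0 < h) by (unfold h; lra).
  assert (Hhr : h < r) by (unfold h; pose proof (Rmin_l r (Rmin d1 d2)); lra).
  assert (Hh1 : h < d1) by (unfold h; pose proof (Rmin_r r (Rmin d1 d2)); pose proof (Rmin_l d1 d2); lra).
  assert (Hh2 : h < d2) by (unfold h; pose proof (Rmin_r r (Rmin d1 d2)); pose proof (Rmin_r d1 d2); lra).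
  assert (Hin : forall s d, d > 0 -> h < d -> x <= s <= x + h -> Rabs (s - x) < d).
  { intros s d Hd Hl Hs. rewrite Rabs_right; lra. }
  assert (Hin' : forall s d, d > 0 -> h < d -> y <= s <= y + h -> Rabs (s - y) < d).
  { intros s d Hd Hl Hs. rewrite Rabs_right; lra. }
  destruct (MVT_cor2 (fun s => g s (y + h) - g s y) (fun s => A s (y + h) - A s y) x (x + h))
    as [xi [Exi Rxi]]; [lra| |].
  { intros c Hc. apply dsub; apply HA; try (apply Hin; lra). apply Hin'; lra. apply Hin'; lra. }
  destruct (MVT_cor2 (fun u => A xi u) (fun u => B xi u) y (y + h)) as [eta [Eeta Reta]]; [lra| |].
  { intros c Hc. apply HB; [apply Hin; lra | apply Hin'; lra]. }
  destruct (MVT_cor2 (fun t => g (x + h) t - g x t) (fun t => C (x + h) t - C x t) y (y + h))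
    as [eta' [Eeta' Reta']]; [lra| |].
  { intros c Hc. apply dsub; apply HC; try (apply Hin'; lra). apply Hin; lra. apply Hin; lra. }
  destruct (MVT_cor2 (fun u => C u eta') (fun u => D u eta') x (x + h)) as [xi' [Exi' Rxi']]; [lra| |].
  { intros c Hc. apply HD; [apply Hin; lra | apply Hin'; lra]. }
  assert (Heq : B xi eta * (h * h) = D xi' eta' * (h * h)).
  { replace (x + h - x) with h in * by ring. replace (y + h - y) with h in * by ring.
    transitivity (g (x+h) (y+h) - g (x+h) y - g x (y+h) + g x y).
    - rewrite <- Rmult_assoc, <- Eeta. lra.
    - rewrite <- Rmult_assoc, <- Exi'. lra. }
  apply Rmult_eq_reg_r in Heq; [| apply Rgt_not_eq, Rmult_lt_0_compat; lra].
  assert (W1 : Rabs (B xi eta - B x y) < eps) by (apply Hb1; [apply Hin; lra | apply Hin'; lra]).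
  assert (W2 : Rabs (D xi' eta' - D x y) < eps) by (apply Hb2; [apply Hin; lra | apply Hin'; lra]).
  rewrite Heq in W1. unfold eps in *.
  revert W1 W2. unfold Rabs. repeat destruct Rcase_abs; lra.
Qed.
Theorem mainTheorem4
  (U : R -> R -> R -> Prop) (l1 l2 l3 : R -> R) (f : R -> R -> R -> R)
  (f1 f2 f3 f12 f13 f23 : R -> R -> R -> R) :
  is_open3 U ->
  smooth1 l1 -> smooth1 l2 -> smooth1 l3 ->
  smooth_on3 U f ->
  (forall x y z, U x y z -> pd P1 f x y z (f1 x y z)) ->
  (forall x y z, U x y z -> pd P2 f x y z (f2 x y z)) ->
  (forall x y z, U x y z -> pd P3 f x y z (f3 x y z)) ->
  (forall x y z, U x y z -> pd P2 f1 x y z (f12 x y z)) ->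
  (forall x y z, U x y z -> pd P3 f1 x y z (f13 x y z)) ->
  (forall x y z, U x y z -> pd P3 f2 x y z (f23 x y z)) ->
  ((forall lam : R,
      wedge_d_zero U (alpha1 l1 l2 l3 f1 lam) (alpha2 l1 l2 l3 f2 lam)
                     (alpha3 l1 l2 l3 f3 lam))
   <->
   (forall x y z, U x y z ->
      (l2 y - l3 z) * f1 x y z * f23 x y z
    + (l3 z - l1 x) * f2 x y z * f13 x y z
    + (l1 x - l2 y) * f3 x y z * f12 x y z = 0)).
Proof.
  intros HO S1 S2 S3 Sf Hf1 Hf2 Hf3 Hf12 Hf13 Hf23.
  destruct S1 as [l1' Hl1 _]. destruct S2 as [l2' Hl2 _]. destruct S3 as [l3' Hl3 _].
  destruct Sf as [_ Sf].
  destruct (Sf P1) as [g1 [Hg1 [_ Sg1]]].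
  destruct (Sf P2) as [g2 [Hg2 [_ Sg2]]].
  destruct (Sf P3) as [g3 [Hg3 [_ Sg3]]].
  destruct (Sg1 P2) as [g12 [Hg12 [Cg12 _]]].
  destruct (Sg1 P3) as [g13 [Hg13 [Cg13 _]]].
  destruct (Sg2 P1) as [g21 [Hg21 [Cg21 _]]].
  destruct (Sg2 P3) as [g23 [Hg23 [Cg23 _]]].
  destruct (Sg3 P1) as [g31 [Hg31 [Cg31 _]]].
  destruct (Sg3 P2) as [g32 [Hg32 [Cg32 _]]].
  clear Sf Sg1 Sg2 Sg3.
  assert (E1 : forall x y z, U x y z -> f1 x y z = g1 x y z)
    by (intros x y z HU; exact (uniqueness_limite _ _ _ _ (Hf1 x y z HU) (Hg1 x y z HU))).
  assert (E2 : forall x y z, U x y z -> f2 x y z = g2 x y z)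
    by (intros x y z HU; exact (uniqueness_limite _ _ _ _ (Hf2 x y z HU) (Hg2 x y z HU))).
  assert (E3 : forall x y z, U x y z -> f3 x y z = g3 x y z)
    by (intros x y z HU; exact (uniqueness_limite _ _ _ _ (Hf3 x y z HU) (Hg3 x y z HU))).
  assert (P21 : forall x y z, U x y z -> pd P1 f2 x y z (g21 x y z))
    by (intros x y z HU; eapply pd_ext; eauto).
  assert (P31 : forall x y z, U x y z -> pd P1 f3 x y z (g31 x y z))
    by (intros x y z HU; eapply pd_ext; eauto).
  assert (P32 : forall x y z, U x y z -> pd P2 f3 x y z (g32 x y z))
    by (intros x y z HU; eapply pd_ext; eauto).
  assert (E12 : forall x y z, U x y z -> f12 x y z = g12 x y z).
  { intros x y z HU. apply (uniqueness_limite (fun t => f1 x t z) y).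
    exact (Hf12 x y z HU). apply (pd_ext U f1 g1 P2); auto. }
  assert (E13 : forall x y z, U x y z -> f13 x y z = g13 x y z).
  { intros x y z HU. apply (uniqueness_limite (fun t => f1 x y t) z).
    exact (Hf13 x y z HU). apply (pd_ext U f1 g1 P3); auto. }
  assert (E23 : forall x y z, U x y z -> f23 x y z = g23 x y z).
  { intros x y z HU. apply (uniqueness_limite (fun t => f2 x y t) z).
    exact (Hf23 x y z HU). apply (pd_ext U f2 g2 P3); auto. }
  assert (H0 : forall w e, 0 < e -> Rabs (w - w) < e) by (intros w e He; rewrite Rminus_diag, Rabs_R0; exact He).
  assert (C12 : forall x y z, U x y z -> g12 x y z = g21 x y z).
  { intros x y z HU. destruct (HO x y z HU) as [e [He Hb]].
    apply (clairaut (fun s t => f s t z) (fun s t => g1 s t z) (fun s t => g12 s t z)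
       (fun s t => g2 s t z) (fun s t => g21 s t z) x y e He);
     try (intros s t Hs Ht; cbv beta; assert (U s t z) by (apply Hb; auto);
          first [apply (Hg1 s t z) | apply (Hg12 s t z) | apply (Hg2 s t z) | apply (Hg21 s t z)]; auto).
    - intros eps Heps. destruct (Cg12 x y z HU eps Heps) as [d [Hd Hdb]].
      exists d; split; [exact Hd|]. intros s t Hs Ht. apply Hdb; auto.
    - intros eps Heps. destruct (Cg21 x y z HU eps Heps) as [d [Hd Hdb]].
      exists d; split; [exact Hd|]. intros s t Hs Ht. apply Hdb; auto. }
  assert (C13 : forall x y z, U x y z -> g13 x y z = g31 x y z).
  { intros x y z HU. destruct (HO x y z HU) as [e [He Hb]].
    apply (clairaut (fun s t => f s y t) (fun s t => g1 s y t) (fun s t => g13 s y t)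
       (fun s t => g3 s y t) (fun s t => g31 s y t) x z e He);
     try (intros s t Hs Ht; cbv beta; assert (U s y t) by (apply Hb; auto);
          first [apply (Hg1 s y t) | apply (Hg13 s y t) | apply (Hg3 s y t) | apply (Hg31 s y t)]; auto).
    - intros eps Heps. destruct (Cg13 x y z HU eps Heps) as [d [Hd Hdb]].
      exists d; split; [exact Hd|]. intros s t Hs Ht. apply Hdb; auto.
    - intros eps Heps. destruct (Cg31 x y z HU eps Heps) as [d [Hd Hdb]].
      exists d; split; [exact Hd|]. intros s t Hs Ht. apply Hdb; auto. }
  assert (C23 : forall x y z, U x y z -> g23 x y z = g32 x y z).
  { intros x y z HU. destruct (HO x y z HU) as [e [He Hb]].
    apply (clairaut (fun s t => f x s t) (fun s t => g2 x s t) (fun s t => g23 x s t)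
       (fun s t => g3 x s t) (fun s t => g32 x s t) y z e He);
     try (intros s t Hs Ht; cbv beta; assert (U x s t) by (apply Hb; auto);
          first [apply (Hg2 x s t) | apply (Hg23 x s t) | apply (Hg3 x s t) | apply (Hg32 x s t)]; auto).
    - intros eps Heps. destruct (Cg23 x y z HU eps Heps) as [d [Hd Hdb]].
      exists d; split; [exact Hd|]. intros s t Hs Ht. apply Hdb; auto.
    - intros eps Heps. destruct (Cg32 x y z HU eps Heps) as [d [Hd Hdb]].
      exists d; split; [exact Hd|]. intros s t Hs Ht. apply Hdb; auto. }
  assert (D12 : forall lam x y z, U x y z -> pd P2 (alpha1 l1 l2 l3 f1 lam) x y z
     (- l2' y * (lam - l3 z) * f1 x y z + (lam - l2 y) * (lam - l3 z) * f12 x y z)).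
  { intros lam x y z HU; unfold pd, alpha1. apply (dform1 l2 (fun t => f1 x t z)); auto. apply (Hf12 x y z HU). }
  assert (D13 : forall lam x y z, U x y z -> pd P3 (alpha1 l1 l2 l3 f1 lam) x y z
     ((lam - l2 y) * (- l3' z) * f1 x y z + (lam - l2 y) * (lam - l3 z) * f13 x y z)).
  { intros lam x y z HU; unfold pd, alpha1. apply (dform2 l3 (fun t => f1 x y t)); auto. apply (Hf13 x y z HU). }
  assert (D21 : forall lam x y z, U x y z -> pd P1 (alpha2 l1 l2 l3 f2 lam) x y z
     (- l1' x * (lam - l3 z) * f2 x y z + (lam - l1 x) * (lam - l3 z) * g21 x y z)).
  { intros lam x y z HU; unfold pd, alpha2. apply (dform1 l1 (fun t => f2 t y z)); auto. apply (P21 x y z HU). }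
  assert (D23 : forall lam x y z, U x y z -> pd P3 (alpha2 l1 l2 l3 f2 lam) x y z
     ((lam - l1 x) * (- l3' z) * f2 x y z + (lam - l1 x) * (lam - l3 z) * f23 x y z)).
  { intros lam x y z HU; unfold pd, alpha2. apply (dform2 l3 (fun t => f2 x y t)); auto. apply (Hf23 x y z HU). }
  assert (D31 : forall lam x y z, U x y z -> pd P1 (alpha3 l1 l2 l3 f3 lam) x y z
     (- l1' x * (lam - l2 y) * f3 x y z + (lam - l1 x) * (lam - l2 y) * g31 x y z)).
  { intros lam x y z HU; unfold pd, alpha3. apply (dform1 l1 (fun t => f3 t y z)); auto. apply (P31 x y z HU). }
  assert (D32 : forall lam x y z, U x y z -> pd P2 (alpha3 l1 l2 l3 f3 lam) x y z
     ((lam - l1 x) * (- l2' y) * f3 x y z + (lam - l1 x) * (lam - l2 y) * g32 x y z)).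
  { intros lam x y z HU; unfold pd, alpha3. apply (dform2 l2 (fun t => f3 x t z)); auto. apply (P32 x y z HU). }
  assert (Key : forall lam x y z, U x y z ->
     alpha1 l1 l2 l3 f1 lam x y z *
       (((lam - l1 x) * (- l2' y) * f3 x y z + (lam - l1 x) * (lam - l2 y) * g32 x y z)
        - ((lam - l1 x) * (- l3' z) * f2 x y z + (lam - l1 x) * (lam - l3 z) * f23 x y z))
     - alpha2 l1 l2 l3 f2 lam x y z *
       ((- l1' x * (lam - l2 y) * f3 x y z + (lam - l1 x) * (lam - l2 y) * g31 x y z)
        - ((lam - l2 y) * (- l3' z) * f1 x y z + (lam - l2 y) * (lam - l3 z) * f13 x y z))
     + alpha3 l1 l2 l3 f3 lam x y z *
       ((- l1' x * (lam - l3 z) * f2 x y z + (lam - l1 x) * (lam - l3 z) * g21 x y z)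
        - (- l2' y * (lam - l3 z) * f1 x y z + (lam - l2 y) * (lam - l3 z) * f12 x y z))
     = - ((lam - l1 x) * (lam - l2 y) * (lam - l3 z)) *
       ((l2 y - l3 z) * f1 x y z * f23 x y z
      + (l3 z - l1 x) * f2 x y z * f13 x y z
      + (l1 x - l2 y) * f3 x y z * f12 x y z)).
  { intros lam x y z HU. unfold alpha1, alpha2, alpha3.
    rewrite <- (C23 x y z HU), <- (C13 x y z HU), <- (C12 x y z HU),
      <- (E23 x y z HU), <- (E13 x y z HU), <- (E12 x y z HU). ring. }
  split.
  - intros Hw x y z HU.
    set (lam := Rabs (l1 x) + Rabs (l2 y) + Rabs (l3 z) + 1).
    pose proof (Hw lam x y z HU _ _ _ _ _ _ (D12 lam x y z HU) (D13 lam x y z HU)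
      (D21 lam x y z HU) (D23 lam x y z HU) (D31 lam x y z HU) (D32 lam x y z HU)) as Hz.
    rewrite Key in Hz by exact HU.
    assert (Hp : (lam - l1 x) * (lam - l2 y) * (lam - l3 z) <> 0).
    { pose proof (Rle_abs (l1 x)); pose proof (Rle_abs (l2 y)); pose proof (Rle_abs (l3 z)).
      pose proof (Rabs_pos (l1 x)); pose proof (Rabs_pos (l2 y)); pose proof (Rabs_pos (l3 z)).
      unfold lam. repeat apply Rmult_integral_contrapositive_currified; lra. }
    destruct (Rmult_integral _ _ Hz) as [Hc|Hc]; [exfalso; apply Hp; lra | exact Hc].
  - intros HE lam x y z HU d12 d13 d21 d23 d31 d32 H12 H13 H21 H23 H31 H32.
    rewrite (uniqueness_limite _ _ _ _ H12 (D12 lam x y z HU)),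
      (uniqueness_limite _ _ _ _ H13 (D13 lam x y z HU)),
      (uniqueness_limite _ _ _ _ H21 (D21 lam x y z HU)),
      (uniqueness_limite _ _ _ _ H23 (D23 lam x y z HU)),
      (uniqueness_limite _ _ _ _ H31 (D31 lam x y z HU)),
      (uniqueness_limite _ _ _ _ H32 (D32 lam x y z HU)).
    rewrite Key by exact HU. rewrite (HE x y z HU). ring.
Qed.
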